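(* Let $s,s'\in\mathbb C$ and $f\in C_c^{\mathrm{lc}}(G/M)$. Then $\mathcal R_{s,s'}f$ is a well-defined, locally constant, compactly supported function on $G/M\langle\tau\rangle$; equivalently, under the bijection $G/M\langle\tau\rangle\cong(\Omega\times\Omega)\setminus\mathrm{diag}(\Omega)$, $\mathcal R_{s,s'}f\in C_c^{\mathrm{lc}}((\Omega\times\Omega)\setminus\mathrm{diag}(\Omega))$.
   Context: Let $q\ge2$, $\mathfrak G$ the $(q+1)$-regular tree with vertex set $\mathfrak X$, graph distance $d$ and boundary $\Omega$ (infinite non-backtracking edge chains modulo eventual equality up to shift, topologized by the sets of classes of chains starting with a given directed edge). Fix a vertex $o$ and $\omega_-\ne\omega_+$ with $o$ on the geodesic $]\omega_-,\omega_+[$; $\langle x,\omega\rangle=d(o,y)-d(x,y)$ where $[o,\omega)\cap[x,\omega)=[y,\omega)$. $G=\mathrm{Aut}(\mathfrak G)$ (topology of pointwise convergence), $K=\mathrm{Stab}_G(o)$, $B_{\omega_+}=\{g:g\omega_+=\omega_+,\ g\text{ fixes a vertex}\}$, $\tau\in G$ fixes $\omega_\pm$ and translates $]\omega_-,\omega_+[$ one step towards $\omega_+$; $g=kn\tau^j$ ($k\in K,n\in B_{\omega_+}$) with unique $j=:H(g)$. $r\in K$ with $r^2=\mathrm{id}$, $r\tau^jr^{-1}=\tau^{-j}$. $M=\{\gamma\in K:\gamma$ fixes $]\omega_-,\omega_+[$ pointwise$\}$. $G/M$ is homeomorphic to $\mathfrak P=\{(\omega_1,\omega_2,x):\omega_1\neq\omega_2,\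 x\in]\omega_1,\omega_2[\}\subseteq\Omega\times\Omega\times\mathfrak X$ via $gM\mapsto(g\omega_-,g\omega_+,go)$; $C_c^{\mathrm{lc}}(G/M)$ denotes locally constant compactly supported functions. $G/M\langle\tau\rangle$ carries the quotient topology, and $gM\langle\tau\rangle\mapsto(g\omega_-,g\omega_+)$ is a bijection onto $(\Omega\times\Omega)\setminus\mathrm{diag}(\Omega)$. With $d_{s,s'}(gM)=q^{(\frac12+is)H(g)}q^{(\frac12+is')H(gr)}$, the weighted Radon transform is $(\mathcal R_{s,s'}f)(g)=\sum_{j\in\mathbb Z}f(g\tau^jM)\,d_{s,-\overline{s'}}(g\tau^jM)$. *)

(* Defs.v *)
From Stdlib Require Import Reals ZArith List ClassicalEpsilon.
From Coquelicot Require Import Coquelicot.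

Set Implicit Arguments.

Section Tree.
Variable V : Type.
Variable adj : V -> V -> Prop.

Fixpoint nb_walk (l : list V) : Prop :=
  match l with
  | x :: ((y :: nil) as t) => adj x y
  | x :: ((y :: z :: _) as t) => adj x y /\ z <> x /\ nb_walk t
  | _ => True
  end.

Fixpoint walk (l : list V) : Prop :=
  match l with
  | x :: ((y :: _) as t) => adj x y /\ walk t
  | _ => True
  end.

Definition is_regular_tree (q : nat) : Prop :=
  (forall x y, adj x y -> adj y x) /\
  (forall x, ~ adj x x) /\
  (forall x, exists nbrs : list V,
       length nbrs = S q /\ NoDup nbrs /\ forall y, adj x y <-> In y nbrs) /\
  (forall x y, exists l, walk (x :: l ++ y :: nil)) /\
  (forall x l, ~ nb_walk (x :: l ++ x :: nil)).

(* ---------- boundary: rays modulo eventual equality up to shift ---------- *)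

Definition ray (w : nat -> V) : Prop :=
  (forall n, adj (w n) (w (S n))) /\ (forall n, w (S (S n)) <> w n).

Definition ray_equiv (w1 w2 : nat -> V) : Prop :=
  exists k m, forall n, w1 (n + k)%nat = w2 (n + m)%nat.

Definition is_aut (g : V -> V) : Prop :=
  (forall x y, adj x y <-> adj (g x) (g y)) /\
  exists ginv : V -> V, forall x, ginv (g x) = x /\ g (ginv x) = x.

Definition fixes_end (g : V -> V) (w : nat -> V) : Prop :=
  ray_equiv (fun n => g (w n)) w.

(* the bi-infinite geodesic ]omega_-, omega_+[ , ell 0 = o *)
Definition bi_geodesic (ell : Z -> V) : Prop :=
  (forall z, adj (ell z) (ell (z + 1)%Z)) /\ (forall z, ell (z + 2)%Z <> ell z).

Definition omega_plus (ell : Z -> V) : nat -> V := fun n => ell (Z.of_nat n).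
Definition omega_minus (ell : Z -> V) : nat -> V := fun n => ell (- Z.of_nat n)%Z.

Definition inK (o : V) (k : V -> V) : Prop := is_aut k /\ k o = o.

Definition inB (ell : Z -> V) (n : V -> V) : Prop :=
  is_aut n /\ fixes_end n (omega_plus ell) /\ exists v, n v = v.

Definition inM (o : V) (ell : Z -> V) (g : V -> V) : Prop :=
  inK o g /\ forall z, g (ell z) = ell z.

Definition tpow (tau tinv : V -> V) (j : Z) : V -> V :=
  match j with
  | Z0 => fun x => x
  | Zpos p => Nat.iter (Pos.to_nat p) tau
  | Zneg p => Nat.iter (Pos.to_nat p) tinv
  end.

Definition Hiw (o : V) (ell : Z -> V) (tau tinv : V -> V) (g : V -> V) : Z :=
  epsilon (inhabits 0%Z) (fun j => exists k n, inK o k /\ inB ell n /\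
     forall x, g x = k (n (tpow tau tinv j x))).

(* open subsets of G = Aut (pointwise convergence, V discrete) *)
Definition G_open (U : (V -> V) -> Prop) : Prop :=
  forall g, is_aut g -> U g -> exists F : list V,
    forall h, is_aut h -> (forall x, In x F -> h x = g x) -> U h.

(* right-L-saturated subsets of G = subsets of G/L *)
Definition saturated (L : (V -> V) -> Prop) (S : (V -> V) -> Prop) : Prop :=
  forall g l, is_aut g -> L l -> S g -> S (fun x => g (l x)).

Definition quot_open (L : (V -> V) -> Prop) (U : (V -> V) -> Prop) : Prop := saturated L U /\ G_open U.

Definition quot_compact (L : (V -> V) -> Prop) (S : (V -> V) -> Prop) : Prop :=
  saturated L S /\
  forall (I : Type) (U : I -> (V -> V) -> Prop),
    (forall i, quot_open L (U i)) ->
    (forall g, is_aut g -> S g -> exists i, U i g) ->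
    exists fin : list I, forall g, is_aut g -> S g -> exists i, In i fin /\ U i g.

(* F : G -> C descends to G/L *)
Definition invariant (L : (V -> V) -> Prop) (F : (V -> V) -> C) : Prop :=
  forall g l, is_aut g -> L l -> F (fun x => g (l x)) = F g.

Definition quot_loc_const (L : (V -> V) -> Prop) (F : (V -> V) -> C) : Prop :=
  forall g, is_aut g -> exists U, quot_open L U /\ U g /\
    forall h, is_aut h -> U h -> F h = F g.

Definition quot_comp_supp (L : (V -> V) -> Prop) (F : (V -> V) -> C) : Prop :=
  exists S, quot_compact L S /\ forall g, is_aut g -> F g <> RtoC 0 -> S g.

Definition Cc_lc (L : (V -> V) -> Prop) (F : (V -> V) -> C) : Prop :=
  invariant L F /\ quot_loc_const L F /\ quot_comp_supp L F.

Definition inMtau o ell tau tinv (l : V -> V) : Prop :=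
  exists gam k, inM o ell gam /\ l = (fun x => gam (tpow tau tinv k x)).

End Tree.

Definition cexp (z : C) : C :=
  (exp (fst z) * cos (snd z), exp (fst z) * sin (snd z))%R.

Definition qpow (q : nat) (z : C) (j : Z) : C :=
  cexp (Cmult z (RtoC (IZR j * ln (INR q)))).

Definition half_plus_is (s : C) : C := Cplus (RtoC (/2)) (Cmult Ci s).

Definition dss {V : Type} (adj : V -> V -> Prop) (q : nat) (o : V) (ell : Z -> V)
    (tau tinv r : V -> V) (s s' : C) (g : V -> V) : C :=
  Cmult (qpow q (half_plus_is s) (Hiw adj o ell tau tinv g))
        (qpow q (half_plus_is s') (Hiw adj o ell tau tinv (fun x => g (r x)))).

Definition zsum (a : Z -> C) : C :=
  let N := epsilon (inhabits 0%nat)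
             (fun N : nat => forall j, (Z.of_nat N < Z.abs j)%Z -> a j = RtoC 0) in
  fold_right Cplus (RtoC 0)
    (map (fun k => a (Z.of_nat k - Z.of_nat N)%Z) (seq 0 (2 * N + 1))).

Definition radon_term {V : Type} (adj : V -> V -> Prop) (q : nat) (o : V) (ell : Z -> V)
    (tau tinv r : V -> V) (s s' : C) (f : (V -> V) -> C) (g : V -> V) (j : Z) : C :=
  let gj := fun x => g (tpow tau tinv j x) in
  Cmult (f gj) (dss adj q o ell tau tinv r s (Copp (Cconj s')) gj).

Definition radon {V : Type} (adj : V -> V -> Prop) (q : nat) (o : V) (ell : Z -> V)
    (tau tinv r : V -> V) (s s' : C) (f : (V -> V) -> C) (g : V -> V) : C :=
  zsum (radon_term adj q o ell tau tinv r s s' f g).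

(* Main.v *)
Require Import Defs.
From Stdlib Require Import Reals ZArith List ClassicalEpsilon FunctionalExtensionality PropExtensionality Classical Lia.
From Coquelicot Require Import Coquelicot.


Fixpoint sumZ (a : Z -> C) (lo : Z) (n : nat) : C :=
  match n with
  | O => RtoC 0
  | S n => Cplus (a lo) (sumZ a (lo + 1)%Z n)
  end.

Lemma fold_map_seq a N s n :
  fold_right Cplus (RtoC 0) (map (fun k => a (Z.of_nat k - Z.of_nat N)%Z) (seq s n))
  = sumZ a (Z.of_nat s - Z.of_nat N)%Z n.
Proof.
  revert s. induction n; intro s; simpl; auto.
  rewrite IHn. do 2 f_equal. lia.
Qed.

Lemma sumZ_split a lo n m : sumZ a lo (n + m) = Cplus (sumZ a lo n) (sumZ a (lo + Z.of_nat n)%Z m).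
Proof.
  revert lo. induction n; intro lo; simpl.
  - rewrite Cplus_0_l, Z.add_0_r. reflexivity.
  - rewrite IHn, Cplus_assoc. f_equal. f_equal. lia.
Qed.

Lemma sumZ_zero a lo n : (forall i, (lo <= i < lo + Z.of_nat n)%Z -> a i = RtoC 0) -> sumZ a lo n = RtoC 0.
Proof.
  revert lo. induction n; intros lo H; simpl; auto.
  rewrite H by lia. rewrite IHn. apply Cplus_0_l. intros i Hi. apply H. lia.
Qed.

Lemma sumZ_shift a k lo n : sumZ (fun j => a (j + k)%Z) lo n = sumZ a (lo + k)%Z n.
Proof.
  revert lo. induction n; intro lo; simpl; auto.
  rewrite IHn. f_equal. f_equal. lia.
Qed.

Definition validN (a : Z -> C) (N : nat) := forall j, (Z.of_nat N < Z.abs j)%Z -> a j = RtoC 0.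

Lemma window a N lo n : validN a N -> (lo <= - Z.of_nat N)%Z ->
  (Z.of_nat N + 1 <= lo + Z.of_nat n)%Z ->
  sumZ a lo n = sumZ a (- Z.of_nat N)%Z (2 * N + 1).
Proof.
  intros HN H1 H2.
  pose (p := Z.to_nat (- Z.of_nat N - lo)).
  assert (Hp : Z.of_nat p = (- Z.of_nat N - lo)%Z) by (unfold p; lia).
  clearbody p.
  pose (m := (n - p - (2 * N + 1))%nat).
  assert (En : n = (p + ((2 * N + 1) + m))%nat) by lia.
  rewrite En, (sumZ_split a lo p), (sumZ_split a (lo + Z.of_nat p) (2*N+1) m).
  rewrite (sumZ_zero a lo p), (sumZ_zero a _ m).
  - rewrite Cplus_0_l, Cplus_0_r. f_equal. lia.
  - intros i Hi. apply HN. lia.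
  - intros i Hi. apply HN. lia.
Qed.

Lemma zsum_valid a : (exists N, validN a N) ->
  exists N, validN a N /\ zsum a = sumZ a (- Z.of_nat N)%Z (2 * N + 1).
Proof.
  intros Hex. unfold zsum.
  set (N := epsilon _ _).
  assert (HN : validN a N) by (apply (epsilon_spec _ _ Hex)).
  exists N. split; auto.
  rewrite fold_map_seq. f_equal; try lia.
Qed.

Lemma validN_shift a k N : validN a N -> validN (fun j => a (j + k)%Z) (N + Z.to_nat (Z.abs k)).
Proof. intros H j Hj. apply H. lia. Qed.

Lemma zsum_shift a k : (exists N, validN a N) -> zsum (fun j => a (j + k)%Z) = zsum a.
Proof.
  intros Hex. destruct Hex as [N0 H0].
  destruct (zsum_valid a (ex_intro _ N0 H0)) as [Na [HNa Ea]].
  destruct (zsum_valid _ (ex_intro _ _ (validN_shift a k N0 H0))) as [Nb [HNb Eb]].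
  rewrite Ea, Eb.
  set (M := (Na + Nb + Z.to_nat (Z.abs k))%nat).
  rewrite <- (window _ Nb (- Z.of_nat M) (2 * M + 1)) by (auto; lia).
  rewrite <- (window _ Na (- Z.of_nat M + k) (2 * M + 1)) by (auto; lia).
  apply sumZ_shift.
Qed.

Lemma zsum_zero : zsum (fun _ => RtoC 0) = RtoC 0.
Proof.
  unfold zsum. set (N := epsilon _ _). clearbody N.
  induction (seq 0 (2 * N + 1)); simpl; auto. rewrite IHl. apply Cplus_0_l.
Qed.


Section Main.
Variable q : nat.
Variable V : Type.
Variable adj : V -> V -> Prop.
Hypothesis Htree : is_regular_tree adj q.
Variable o : V.
Variable ell : Z -> V.
Hypothesis Hell : bi_geodesic adj ell.
Hypothesis Ho : ell 0%Z = o.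
Variables tau tinv : V -> V.
Hypothesis Htau : is_aut adj tau.
Hypothesis Htinv : forall x, tinv (tau x) = x /\ tau (tinv x) = x.
Hypothesis Htau_tr : forall z, tau (ell z) = ell (z + 1)%Z.
Variable r : V -> V.
Hypothesis Hr : inK adj o r.
Hypothesis Hr2 : forall x, r (r x) = x.
Hypothesis Hrtau : forall j x, r (tpow tau tinv j (r x)) = tpow tau tinv (- j) x.

Notation tp := (tpow tau tinv).

Lemma tp_pos n x : tp (Z.of_nat n) x = Nat.iter n tau x.
Proof. destruct n; [reflexivity|]. simpl. rewrite SuccNat2Pos.id_succ. reflexivity. Qed.

Lemma tp_neg n x : tp (- Z.of_nat n) x = Nat.iter n tinv x.
Proof. destruct n; [reflexivity|]. simpl. rewrite SuccNat2Pos.id_succ. reflexivity. Qed.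

Lemma Z_cases z : (exists n, z = Z.of_nat n) \/ (exists n, z = (- Z.of_nat (S n))%Z).
Proof.
  destruct (Z_le_gt_dec 0 z).
  - left. exists (Z.to_nat z). lia.
  - right. exists (Z.to_nat (- z - 1)). lia.
Qed.

Lemma tp_succ z x : tp (Z.succ z) x = tau (tp z x).
Proof.
  destruct (Z_cases z) as [[n ->]|[n ->]].
  - replace (Z.succ (Z.of_nat n)) with (Z.of_nat (S n)) by lia.
    rewrite !tp_pos. reflexivity.
  - replace (Z.succ (- Z.of_nat (S n))) with (- Z.of_nat n)%Z by lia.
    rewrite !tp_neg. simpl. rewrite (proj2 (Htinv _)). reflexivity.
Qed.

Lemma tp_pred z x : tp (Z.pred z) x = tinv (tp z x).
Proof.
  destruct (Z_cases z) as [[n ->]|[n ->]].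
  - destruct n.
    + simpl. change (tp (-1) x) with (tinv x). reflexivity.
    + replace (Z.pred (Z.of_nat (S n))) with (Z.of_nat n) by lia.
      rewrite !tp_pos. simpl. rewrite (proj1 (Htinv _)). reflexivity.
  - replace (Z.pred (- Z.of_nat (S n))) with (- Z.of_nat (S (S n)))%Z by lia.
    rewrite !tp_neg. reflexivity.
Qed.

Lemma tp_add a b x : tp (a + b) x = tp a (tp b x).
Proof.
  revert x. induction a using Z.peano_ind; intro x.
  - reflexivity.
  - replace (Z.succ a + b)%Z with (Z.succ (a + b)) by lia.
    rewrite !tp_succ, IHa. reflexivity.
  - replace (Z.pred a + b)%Z with (Z.pred (a + b)) by lia.
    rewrite !tp_pred, IHa. reflexivity.
Qed.

Lemma tp_inv j x : tp (- j) (tp j x) = x.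
Proof. rewrite <- tp_add. replace (- j + j)%Z with 0%Z by lia. reflexivity. Qed.

Lemma tp_inv' j x : tp j (tp (- j) x) = x.
Proof. rewrite <- tp_add. replace (j + - j)%Z with 0%Z by lia. reflexivity. Qed.

Lemma tp_ell j z : tp j (ell z) = ell (z + j)%Z.
Proof.
  induction j using Z.peano_ind.
  - simpl. rewrite Z.add_0_r. reflexivity.
  - rewrite tp_succ, IHj, Htau_tr. f_equal; lia.
  - rewrite tp_pred, IHj. replace (z + j)%Z with (z + Z.pred j + 1)%Z by lia.
    rewrite <- Htau_tr, (proj1 (Htinv _)). f_equal; lia.
Qed.

Lemma tp_o j : tp j o = ell j.
Proof. rewrite <- Ho, tp_ell. f_equal; lia. Qed.

Lemma aut_id : is_aut adj (fun x => x).
Proof. split; [tauto| exists (fun x => x); auto]. Qed.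

Lemma aut_comp a b : is_aut adj a -> is_aut adj b -> is_aut adj (fun x => a (b x)).
Proof.
  intros [Ha [ai Hai]] [Hb [bi Hbi]]. split.
  - intros x y. rewrite Hb, Ha. tauto.
  - exists (fun x => bi (ai x)). intro x. split.
    + rewrite (proj1 (Hai _)), (proj1 (Hbi _)). auto.
    + rewrite (proj2 (Hbi _)), (proj2 (Hai _)). auto.
Qed.

Lemma aut_inv a ai : is_aut adj a -> (forall x, ai (a x) = x /\ a (ai x) = x) -> is_aut adj ai.
Proof.
  intros [Ha _] H. split.
  - intros x y. rewrite (Ha (ai x) (ai y)), (proj2 (H x)), (proj2 (H y)). tauto.
  - exists a. intro x. split; apply H.
Qed.

Lemma aut_tinv : is_aut adj tinv.
Proof. exact (aut_inv tau tinv Htau Htinv). Qed.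

Lemma aut_tp j : is_aut adj (tp j).
Proof.
  induction j using Z.peano_ind.
  - exact aut_id.
  - assert (E : tp (Z.succ j) = fun x => tau (tp j x)) by (extensionality x; apply tp_succ).
    rewrite E. apply aut_comp; auto.
  - assert (E : tp (Z.pred j) = fun x => tinv (tp j x)) by (extensionality x; apply tp_pred).
    rewrite E. apply aut_comp; auto. apply aut_tinv.
Qed.

Lemma aut_inj a x y : is_aut adj a -> a x = a y -> x = y.
Proof. intros [_ [ai H]] E. rewrite <- (proj1 (H x)), <- (proj1 (H y)), E. auto. Qed.


Lemma aut_has_inv a : is_aut adj a -> exists ai, is_aut adj ai /\ forall x, ai (a x) = x /\ a (ai x) = x.
Proof. intros Ha. destruct Ha as [H1 [ai H]] eqn:E. exists ai. split; auto. apply (aut_inv a ai); auto. Qed.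

Lemma inK_comp a b : inK adj o a -> inK adj o b -> inK adj o (fun x => a (b x)).
Proof. intros [Ha Ha0] [Hb Hb0]. split. apply aut_comp; auto. rewrite Hb0; auto. Qed.

Lemma inK_inv a ai : inK adj o a -> (forall x, ai (a x) = x /\ a (ai x) = x) -> inK adj o ai.
Proof. intros [Ha Ha0] H. split. apply (aut_inv a ai); auto. rewrite <- Ha0 at 1. apply H. Qed.

Lemma inK_id : inK adj o (fun x => x).
Proof. split; auto using aut_id. Qed.

Lemma inM_comp a b : inM adj o ell a -> inM adj o ell b -> inM adj o ell (fun x => a (b x)).
Proof. intros [Ha Ha1] [Hb Hb1]. split. apply inK_comp; auto. intro z. rewrite Hb1; auto. Qed.

Lemma inM_inv a ai : inM adj o ell a -> (forall x, ai (a x) = x /\ a (ai x) = x) -> inM adj o ell ai.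
Proof. intros [Ha Ha1] H. split. apply (inK_inv a ai); auto. intro z. rewrite <- (Ha1 z) at 1. apply H. Qed.

Lemma inM_id : inM adj o ell (fun x => x).
Proof. split; auto using inK_id. Qed.

Lemma inM_has_inv a : inM adj o ell a -> exists ai, inM adj o ell ai /\ forall x, ai (a x) = x /\ a (ai x) = x.
Proof.
  intros Ha. destruct (aut_has_inv a (proj1 (proj1 Ha))) as [ai [_ H]].
  exists ai. split; auto. apply (inM_inv a ai); auto.
Qed.

Lemma inK_has_inv a : inK adj o a -> exists ai, inK adj o ai /\ forall x, ai (a x) = x /\ a (ai x) = x.
Proof.
  intros Ha. destruct (aut_has_inv a (proj1 Ha)) as [ai [_ H]].
  exists ai. split; auto. apply (inK_inv a ai); auto.
Qed.

Lemma inM_conj g a b : inM adj o ell g -> (a + b = 0)%Z -> inM adj o ell (fun y => tp a (g (tp b y))).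
Proof.
  intros [[Hg Hg0] Hg1] Hab.
  assert (F : forall z, tp a (g (tp b (ell z))) = ell z).
  { intro z. rewrite tp_ell, Hg1, tp_ell. f_equal. lia. }
  split; [split|]; auto.
  - apply aut_comp. apply aut_tp. apply aut_comp; auto. apply aut_tp.
  - rewrite <- Ho. apply F.
Qed.

Lemma r_ell z : r (ell z) = ell (- z)%Z.
Proof.
  pose proof (Hrtau z o) as H. rewrite (proj2 Hr) in H.
  rewrite !tp_o in H. exact H.
Qed.

Lemma inM_rconj g : inM adj o ell g -> inM adj o ell (fun y => r (g (r y))).
Proof.
  intros [[Hg Hg0] Hg1].
  assert (F : forall z, r (g (r (ell z))) = ell z).
  { intro z. rewrite r_ell, Hg1, r_ell. f_equal. lia. }
  split; [split|]; auto.
  - apply aut_comp. apply (proj1 Hr). apply aut_comp; auto. apply (proj1 Hr).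
  - rewrite <- Ho. apply F.
Qed.

Definition PH (g : V -> V) (j : Z) : Prop := exists k n, inK adj o k /\ inB adj ell n /\
     forall x, g x = k (n (tpow tau tinv j x)).

Lemma Hiw_PH g : Hiw adj o ell tau tinv g = epsilon (inhabits 0%Z) (PH g).
Proof. reflexivity. Qed.

Lemma Hiw_ext g1 g2 : (forall j, PH g1 j -> PH g2 j) -> (forall j, PH g2 j -> PH g1 j) ->
  Hiw adj o ell tau tinv g1 = Hiw adj o ell tau tinv g2.
Proof.
  intros H1 H2. rewrite !Hiw_PH. f_equal. extensionality j.
  apply propositional_extensionality. split; auto.
Qed.

Lemma PH_K g1 g2 k j : inK adj o k -> (forall x, g2 x = k (g1 x)) -> PH g1 j -> PH g2 j.
Proof.
  intros Hk E [k1 [n [Hk1 [Hn Hx]]]]. exists (fun x => k (k1 x)), n.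
  split; [apply inK_comp; auto|split; auto]. intro x. rewrite E, Hx. reflexivity.
Qed.

Lemma Hiw_K g1 g2 k : inK adj o k -> (forall x, g2 x = k (g1 x)) ->
  Hiw adj o ell tau tinv g2 = Hiw adj o ell tau tinv g1.
Proof.
  intros Hk E. destruct (inK_has_inv k Hk) as [ki [Hki Hi]].
  apply Hiw_ext; intro j.
  - apply (PH_K g2 g1 ki j Hki). intro x. rewrite E. symmetry. apply Hi.
  - apply (PH_K g1 g2 k j Hk E).
Qed.

Lemma PH_M g1 g2 gam j : inM adj o ell gam -> (forall x, g2 x = g1 (gam x)) -> PH g1 j -> PH g2 j.
Proof.
  intros Hg E [k [n [Hk [[Hna [Hne [v Hv]]] Hx]]]].
  pose (gp := fun y => tp j (gam (tp (- j) y))).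
  assert (Hgp : inM adj o ell gp) by (apply inM_conj; auto; lia).
  destruct (inM_has_inv gp Hgp) as [gi [Hgi Hi]].
  exists (fun x => k (gp x)), (fun x => gi (n (gp x))).
  split; [apply inK_comp; auto; apply Hgp|split].
  - split; [|split].
    + apply aut_comp. apply Hgi. apply aut_comp; auto. apply Hgp.
    + destruct Hne as [a [b Hab]]. exists a, b. intro m. simpl.
      unfold omega_plus in *. simpl in Hab.
      rewrite (proj2 Hgp). rewrite Hab. apply Hgi.
    + exists (gi v). rewrite (proj2 (Hi v)), Hv. reflexivity.
  - intro x. rewrite (proj2 (Hi _)). rewrite E, Hx. unfold gp. rewrite tp_inv. reflexivity.
Qed.

Lemma Hiw_M g1 g2 gam : inM adj o ell gam -> (forall x, g2 x = g1 (gam x)) ->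
  Hiw adj o ell tau tinv g2 = Hiw adj o ell tau tinv g1.
Proof.
  intros Hg E. destruct (inM_has_inv gam Hg) as [gi [Hgi Hi]].
  apply Hiw_ext; intro j.
  - apply (PH_M g2 g1 gi j Hgi). intro x. rewrite E. f_equal. symmetry. apply Hi.
  - apply (PH_M g1 g2 gam j Hg E).
Qed.


Lemma dss_K s1 s2 G1 G2 k : inK adj o k -> (forall x, G2 x = k (G1 x)) ->
  dss adj q o ell tau tinv r s1 s2 G2 = dss adj q o ell tau tinv r s1 s2 G1.
Proof.
  intros Hk E. unfold dss.
  rewrite (Hiw_K G1 G2 k Hk E).
  rewrite (Hiw_K (fun x => G1 (r x)) (fun x => G2 (r x)) k Hk); auto.
Qed.

Lemma dss_M s1 s2 G1 G2 gam : inM adj o ell gam -> (forall x, G2 x = G1 (gam x)) ->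
  dss adj q o ell tau tinv r s1 s2 G2 = dss adj q o ell tau tinv r s1 s2 G1.
Proof.
  intros Hg E. unfold dss.
  rewrite (Hiw_M G1 G2 gam Hg E).
  rewrite (Hiw_M (fun x => G1 (r x)) (fun x => G2 (r x)) (fun y => r (gam (r y)))); auto.
  - apply inM_rconj; auto.
  - intro x. rewrite Hr2. apply E.
Qed.

Fixpoint seg (a : Z) (n : nat) : list V :=
  match n with O => nil | S n => ell a :: seg (a + 1)%Z n end.

Lemma nb_seg n i : nb_walk adj (ell i :: seg (i + 1)%Z n).
Proof.
  revert i. induction n; intro i; simpl; auto.
  destruct n.
  - simpl. apply Hell.
  - specialize (IHn (i + 1)%Z). simpl in IHn |- *.
    split; [apply Hell|]. split; auto.
    replace (i + 1 + 1)%Z with (i + 2)%Z by lia. apply Hell.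
Qed.

Lemma seg_last a n : seg a (S n) = seg a n ++ ell (a + Z.of_nat n)%Z :: nil.
Proof.
  revert a. induction n; intro a; simpl.
  - rewrite Z.add_0_r. reflexivity.
  - f_equal. specialize (IHn (a + 1)%Z). simpl in IHn. rewrite IHn. do 3 f_equal. lia.
Qed.

Lemma ell_inj i j : ell i = ell j -> i = j.
Proof.
  destruct Htree as [_ [_ [_ [_ Hac]]]].
  assert (K : forall i j, (i < j)%Z -> ell i <> ell j).
  { clear i j. intros i j Hij E.
    set (n := Z.to_nat (j - i - 1)).
    assert (Ej : j = (i + 1 + Z.of_nat n)%Z) by (unfold n; lia).
    clearbody n.
    apply (Hac (ell i) (seg (i + 1)%Z n)).
    rewrite E at 2. rewrite Ej.
    rewrite <- seg_last. apply nb_seg. }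
  intro E. destruct (Z.lt_total i j) as [H|[H|H]]; auto.
  - exfalso; apply (K i j H E).
  - exfalso; apply (K j i H); auto.
Qed.

Fixpoint reach (n : nat) (x y : V) : Prop :=
  match n with O => x = y | S n => exists z, adj x z /\ reach n z y end.

Lemma reach_aut a n x y : is_aut adj a -> reach n x y -> reach n (a x) (a y).
Proof.
  intros Ha. revert x. induction n; intros x H; simpl in *.
  - subst; auto.
  - destruct H as [z [Hxz Hz]]. exists (a z). split.
    + apply (proj1 Ha x z). exact Hxz.
    + apply IHn. exact Hz.
Qed.

Lemma reach_fin n x : exists L, forall y, reach n x y -> In y L.
Proof.
  revert x. induction n; intro x.
  - exists (x :: nil). intros y H. simpl in H. subst. left; auto.
  - destruct Htree as [_ [_ [Hnb _]]]. destruct (Hnb x) as [nbrs [_ [_ Hn]]].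
    assert (G : forall zs : list V, exists L, forall z, In z zs -> forall y, reach n z y -> In y L).
    { induction zs as [|z zs IH].
      - exists nil. intros z [].
      - destruct IH as [L HL]. destruct (IHn z) as [Lz HLz].
        exists (Lz ++ L). intros z' [<-|Hz'] y Hy; apply in_or_app; [left|right]; eauto. }
    destruct (G nbrs) as [L HL]. exists L. intros y [z [Hxz Hz]].
    apply (HL z); auto. apply Hn; auto.
Qed.

Lemma walk_reach l x y : walk adj (x :: l ++ y :: nil) -> reach (S (length l)) x y.
Proof.
  revert x. induction l as [|a l IH]; intros x H; simpl in *.
  - exists y. split; [apply H|reflexivity].
  - exists a. destruct H as [H1 H2]. split; auto.
Qed.

Lemma reach_conn x y : exists n, reach n x y.
Proof.
  destruct Htree as [_ [_ [_ [Hc _]]]]. destruct (Hc x y) as [l Hl].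
  eexists. apply walk_reach; eauto.
Qed.

Lemma reachT (fin : list V) : exists T, forall v, In v fin ->
  exists n, reach n o v /\ forall y, reach n o y -> In y T.
Proof.
  induction fin as [|v fin IH].
  - exists nil. intros v [].
  - destruct IH as [T HT]. destruct (reach_conn o v) as [n Hn].
    destruct (reach_fin n o) as [L HL].
    exists (L ++ T). intros w [<-|Hw].
    + exists n. split; auto. intros y Hy. apply in_or_app. left; auto.
    + destruct (HT w Hw) as [m [Hm Hm']]. exists m. split; auto.
      intros y Hy. apply in_or_app. right; auto.
Qed.

Lemma boundT g : is_aut adj g -> forall T : list V, exists N : nat,
  forall j, In (g (ell j)) T -> (Z.abs j <= Z.of_nat N)%Z.
Proof.
  intros Hg T. induction T as [|y T IH].
  - exists O. intros j [].
  - destruct IH as [N HN].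
    destruct (classic (exists j0, g (ell j0) = y)) as [[j0 Hj0]|Hno].
    + exists (N + Z.to_nat (Z.abs j0))%nat. intros j [E|Hj].
      * rewrite <- Hj0 in E. apply aut_inj in E; auto. apply ell_inj in E. subst. lia.
      * specialize (HN j Hj). lia.
    + exists N. intros j [E|Hj]; auto. exfalso. apply Hno. eauto.
Qed.


Variables s s' : C.
Variable f : (V -> V) -> C.
Hypothesis Hf_inv : invariant adj (inM adj o ell) f.
Hypothesis Hf_lc : quot_loc_const adj (inM adj o ell) f.
Hypothesis Hf_cs : quot_comp_supp adj (inM adj o ell) f.

Notation RT := (radon_term adj q o ell tau tinv r s s' f).
Notation RD := (radon adj q o ell tau tinv r s s' f).

Lemma aut_ext h h' : is_aut adj h -> (forall x, h' x = h x) -> is_aut adj h'.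
Proof. intros H E. replace h' with h; auto. extensionality x; auto. Qed.

Lemma f_M G1 G2 gam : is_aut adj G1 -> inM adj o ell gam -> (forall x, G2 x = G1 (gam x)) -> f G2 = f G1.
Proof.
  intros H1 Hg E. replace G2 with (fun x => G1 (gam x)) by (extensionality x; auto).
  apply Hf_inv; auto.
Qed.

Lemma tail g : is_aut adj g -> exists N : nat, forall h k', inK adj o k' ->
  (forall x, h x = k' (g x)) -> forall j, (Z.of_nat N < Z.abs j)%Z ->
  f (fun x => h (tp j x)) = RtoC 0.
Proof.
  intros Hg. destruct Hf_cs as [S [[Ssat Scomp] Ssupp]].
  pose (U := fun (v : V) (h : V -> V) => exists k, inK adj o k /\ h o = k v).
  destruct (Scomp V U) as [fin Hfin].
  - intro v. split.
    + intros h l Hh Hl [k [Hk E]]. exists k. split; auto.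
      rewrite (proj2 (proj1 Hl)). auto.
    + intros h Hh [k [Hk E]]. exists (o :: nil). intros h' Hh' Hag.
      exists k. split; auto. rewrite Hag; auto. left; auto.
  - intros h Hh Sh. exists (h o). exists (fun x => x). split; auto. apply inK_id.
  - destruct (reachT fin) as [T HT].
    destruct (boundT g Hg T) as [N HN].
    exists N. intros h k' Hk' Eh j Hj.
    destruct (classic (f (fun x => h (tp j x)) = RtoC 0)) as [|Hne]; auto. exfalso.
    assert (Hh : is_aut adj (fun x => h (tp j x))).
    { apply aut_comp; [|apply aut_tp]. apply (aut_ext (fun x => k' (g x))); auto.
      apply aut_comp; auto. apply Hk'. }
    specialize (Ssupp _ Hh Hne).
    destruct (Hfin _ Hh Ssupp) as [v [Hv [k [Hk E]]]].
    simpl in E. rewrite tp_o, Eh in E.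
    destruct (inK_has_inv k' Hk') as [ki [Hki Hi]].
    destruct (HT v Hv) as [n [Hn HnT]].
    assert (Hr1 : reach n o (ki (k v))).
    { rewrite <- (proj2 Hki). apply reach_aut. apply Hki.
      rewrite <- (proj2 Hk). apply reach_aut; auto. apply Hk. }
    rewrite <- E, (proj1 (Hi _)) in Hr1.
    specialize (HN j (HnT _ Hr1)). lia.
Qed.

Lemma part1 g : is_aut adj g -> exists N, validN (RT g) N.
Proof.
  intros Hg. destruct (tail g Hg) as [N HN]. exists N. intros j Hj.
  unfold radon_term. cbv zeta.
  rewrite (HN g (fun x => x) inK_id (fun x => eq_refl) j Hj). apply Cmult_0_l.
Qed.

Lemma inMtau_aut l : inMtau adj o ell tau tinv l -> is_aut adj l.
Proof. intros [gam [k [Hg ->]]]. apply aut_comp. apply Hg. apply aut_tp. Qed.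

Lemma inMtau_id : inMtau adj o ell tau tinv (fun x => x).
Proof. exists (fun x => x), 0%Z. split; auto. apply inM_id. Qed.

Lemma inMtau_M l : inM adj o ell l -> inMtau adj o ell tau tinv l.
Proof. intros H. exists l, 0%Z. split; auto. Qed.

Lemma inMtau_tp k : inMtau adj o ell tau tinv (tp k).
Proof. exists (fun x => x), k. split; auto. apply inM_id. Qed.

Lemma inMtau_comp l l' : inMtau adj o ell tau tinv l -> inMtau adj o ell tau tinv l' ->
  inMtau adj o ell tau tinv (fun x => l (l' x)).
Proof.
  intros [g [k [Hg ->]]] [g' [k' [Hg' ->]]].
  exists (fun y => g (tp k (g' (tp (- k) y)))), (k + k')%Z. split.
  - apply inM_comp; auto. apply inM_conj; auto. lia.
  - extensionality x. rewrite <- tp_add. do 3 f_equal. f_equal. lia.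
Qed.

Lemma inv_radon g l : is_aut adj g -> inMtau adj o ell tau tinv l -> RD (fun x => g (l x)) = RD g.
Proof.
  intros Hg [gam [k [Hgam ->]]]. unfold radon.
  assert (E : RT (fun x => g (gam (tp k x))) = fun j => RT g (j + k)%Z).
  { extensionality j. unfold radon_term. cbv zeta.
    pose (G1 := fun x => g (tp (j + k) x)).
    pose (g1 := fun y => tp (- (j + k)) (gam (tp (j + k) y))).
    assert (Hg1 : inM adj o ell g1) by (apply inM_conj; auto; lia).
    assert (HG1 : is_aut adj G1) by (unfold G1; apply aut_comp; [exact Hg|apply aut_tp]).
    assert (P : forall x, g (gam (tp k (tp j x))) = G1 (g1 x)).
    { intro x. unfold G1, g1. rewrite tp_inv', <- tp_add. do 3 f_equal. lia. }
    rewrite (f_M G1 _ g1 HG1 Hg1 P). rewrite (dss_M _ _ G1 _ g1 Hg1 P). reflexivity. }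
  rewrite E. apply zsum_shift. apply part1; auto.
Qed.

Lemma Lf g : is_aut adj g -> forall js : list Z, exists L, forall j, In j js ->
  forall h, is_aut adj h -> (forall x, In x L -> h x = g x) ->
  f (fun x => h (tp j x)) = f (fun x => g (tp j x)).
Proof.
  intros Hg js. induction js as [|j js IH].
  - exists nil. intros j [].
  - destruct IH as [L HL].
    assert (Hgj : is_aut adj (fun x => g (tp j x))) by (apply aut_comp; auto; apply aut_tp).
    destruct (Hf_lc _ Hgj) as [U [[Usat Uop] [HUg Hc]]].
    destruct (Uop _ Hgj HUg) as [F HF].
    exists (map (tp j) F ++ L). intros j' [<-|Hj'] h Hh Hag.
    + assert (Hhj : is_aut adj (fun x => h (tp j x))) by (apply aut_comp; auto; apply aut_tp).
      apply Hc; auto. apply HF; auto. intros x Hx. apply Hag. apply in_or_app. left.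
      apply in_map. auto.
    + apply HL; auto. intros x Hx. apply Hag. apply in_or_app. right. auto.
Qed.

Lemma loc_const g : is_aut adj g -> exists U, quot_open adj (inMtau adj o ell tau tinv) U /\ U g /\
    forall h, is_aut adj h -> U h -> RD h = RD g.
Proof.
  intros Hg. destruct (tail g Hg) as [N HN].
  destruct (Lf g Hg (map (fun k => Z.of_nat k - Z.of_nat N)%Z (seq 0 (2 * N + 1)))) as [L HL].
  destruct (aut_has_inv g Hg) as [gi [Hgi Hi]].
  pose (B := fun h => is_aut adj h /\ forall x, In x (gi o :: L) -> h x = g x).
  assert (BC : forall h, B h -> RD h = RD g).
  { intros h [Hh Hag]. unfold radon. f_equal. extensionality j.
    pose (k' := fun x => h (gi x)).
    assert (Hk' : inK adj o k').
    { split; [unfold k'; apply aut_comp; auto|]. unfold k'. rewrite Hag; [apply Hi|left; auto]. }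
    assert (Ek : forall x, h x = k' (g x)). { intro x. unfold k'. rewrite (proj1 (Hi x)). auto. }
    unfold radon_term. cbv zeta. f_equal.
    - destruct (Z_le_gt_dec (Z.abs j) (Z.of_nat N)).
      + apply HL; auto.
        * apply in_map_iff. exists (Z.to_nat (j + Z.of_nat N)). split. lia.
          apply in_seq. lia.
        * intros x Hx. apply Hag. right; auto.
      + rewrite (HN h k' Hk' Ek j), (HN g (fun x => x) inK_id (fun x => eq_refl) j); auto; lia.
    - apply (dss_K _ _ _ _ k' Hk'). intro x. apply Ek. }
  exists (fun h => exists h0 l, B h0 /\ inMtau adj o ell tau tinv l /\ forall x, h x = h0 (l x)).
  split; [split|split].
  - intros h l' Hh Hl' [h0 [l [HB [Hl E]]]]. exists h0, (fun x => l (l' x)).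
    split; auto. split. apply inMtau_comp; auto. intro x. apply E.
  - intros h Hh [h0 [l [HB [Hl E]]]].
    destruct (aut_has_inv l (inMtau_aut l Hl)) as [li [Hli Hli']].
    exists (map li (gi o :: L)). intros h' Hh' Hag.
    exists (fun x => h' (li x)), l. split; [split|split]; auto.
    + apply aut_comp; auto.
    + intros x Hx. rewrite Hag by (apply in_map; auto). rewrite E, (proj2 (Hli' x)).
      apply (proj2 HB); auto.
    + intro x. rewrite (proj1 (Hli' x)). auto.
  - exists g, (fun x => x). split; [split; auto|split; auto]. apply inMtau_id.
  - intros h Hh [h0 [l [HB [Hl E]]]].
    replace h with (fun x => h0 (l x)) by (extensionality x; auto).
    rewrite inv_radon; auto. apply (proj1 HB).
Qed.

Lemma comp_supp : quot_comp_supp adj (inMtau adj o ell tau tinv) RD.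
Proof.
  destruct Hf_cs as [S [[Ssat Scomp] Ssupp]].
  exists (fun g => exists j, S (fun x => g (tp j x))). split; [split|].
  - intros g l Hg [gam [k [Hgam ->]]] [j Sj]. exists (j - k)%Z.
    pose (g1 := fun y => tp (- j) (gam (tp j y))).
    assert (Hg1 : inM adj o ell g1) by (apply inM_conj; auto; lia).
    assert (Hgj : is_aut adj (fun x => g (tp j x))) by (apply aut_comp; auto; apply aut_tp).
    replace (fun x => g (gam (tp k (tp (j - k) x)))) with (fun x => (fun y => g (tp j y)) (g1 x)).
    + apply (Ssat (fun y => g (tp j y)) g1 Hgj Hg1 Sj).
    + extensionality x. unfold g1. rewrite tp_inv', <- tp_add. do 3 f_equal. lia.
  - intros I U HU Hcov.
    destruct (Scomp I U) as [fin Hfin].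
    + intro i. destruct (HU i) as [Us Uo]. split; auto.
      intros g l Hg Hl HUg. apply Us; auto. apply inMtau_M; auto.
    + intros g Hg Sg. apply Hcov; auto. exists 0%Z. exact Sg.
    + exists fin. intros g Hg [j Sj].
      assert (Hgj : is_aut adj (fun x => g (tp j x))) by (apply aut_comp; auto; apply aut_tp).
      destruct (Hfin _ Hgj Sj) as [i [Hi HUi]]. exists i. split; auto.
      pose proof (proj1 (HU i) _ (tp (- j)) Hgj (inMtau_tp (- j)) HUi) as H.
      replace g with (fun x => g (tp j (tp (- j) x))); auto.
      extensionality x. rewrite tp_inv'. auto.
  - intros g Hg Hne. apply NNPP. intro Hn. apply Hne. unfold radon.
    replace (RT g) with (fun _ : Z => RtoC 0). apply zsum_zero.
    extensionality j. unfold radon_term. cbv zeta.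
    destruct (classic (f (fun x => g (tp j x)) = RtoC 0)) as [E|E].
    + rewrite E. symmetry. apply Cmult_0_l.
    + exfalso. apply Hn. exists j. apply Ssupp; auto. apply aut_comp; auto. apply aut_tp.
Qed.

Theorem main_sec :
  (forall g, is_aut adj g -> exists N : nat, forall j, (Z.of_nat N < Z.abs j)%Z ->
      RT g j = RtoC 0) /\
  Cc_lc adj (inMtau adj o ell tau tinv) RD.
Proof.
  split.
  - intros g Hg. destruct (part1 g Hg) as [N HN]. exists N. exact HN.
  - split; [|split].
    + intros g l Hg Hl. apply inv_radon; auto.
    + exact loc_const.
    + exact comp_supp.
Qed.

End Main.

Theorem lemma3p4
  (q : nat) (Hq : (2 <= q)%nat)
  (V : Type) (adj : V -> V -> Prop) (Htree : is_regular_tree adj q)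
  (o : V) (ell : Z -> V) (Hell : bi_geodesic adj ell) (Ho : ell 0%Z = o)
  (tau tinv : V -> V) (Htau : is_aut adj tau)
  (Htinv : forall x, tinv (tau x) = x /\ tau (tinv x) = x)
  (Htau_tr : forall z, tau (ell z) = ell (z + 1)%Z)
  (r : V -> V) (Hr : inK adj o r) (Hr2 : forall x, r (r x) = x)
  (Hrtau : forall j x, r (tpow tau tinv j (r x)) = tpow tau tinv (- j) x)
  (s s' : C) (f : (V -> V) -> C)
  (Hf : Cc_lc adj (inM adj o ell) f) :
  (forall g, is_aut adj g -> exists N : nat, forall j, (Z.of_nat N < Z.abs j)%Z ->
      radon_term adj q o ell tau tinv r s s' f g j = RtoC 0) /\
  Cc_lc adj (inMtau adj o ell tau tinv) (radon adj q o ell tau tinv r s s' f).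
Proof.
  destruct Hf as [H1 [H2 H3]].
  eapply main_sec; eauto.
Qed.
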